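(* Let $G$ be a connected undirected graph on $N\ge2$ nodes with adjacency matrix $A=(a_{ij})$, neighborhoods $\mathcal N_i=\{j:a_{ij}=1\}$, degrees $d_i=\sum_j a_{ij}$ and Laplacian $L=D-A$, $D=\mathrm{diag}(d_1,\dots,d_N)$. Let $w=(w_1,\dots,w_N)^T$ with $w_i>0$ for all $i$. Define the matrix $T$ by $T_{ii}=\big(\sum_{j\in\mathcal N_i}w_j\big)/l_{ii}$ and $T_{ij}=w_j$ for $i\ne j$, and let $\hat W=I-\epsilon\,(T\otimes L)$, where $\otimes$ is entrywise (Hadamard) multiplication. If $0<\epsilon<1/\max_i\big(\sum_{j\in\mathcal N_i}w_j\big)$, then: (1) $\hat W$ is a nonnegative matrix having $w$ as a left eigenvector and $\vec 1=(1,\dots,1)^T$ as a right eigenvector, both for eigenvalue $1$; (2) all eigenvalues of $\hat W$ lie in the closed unit disk; (3) $\hat W$ is primitive.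
   Context: $l_{ii}=d_i$ is the $i$-th diagonal entry of $L$. A matrix is primitive if it is nonnegative and some positive integer power of it has all entries positive. *)

(* Defs.v *)
From HB Require Import structures.
From mathcomp Require Import all_boot all_order all_algebra.
From mathcomp Require Import complex.
Set Implicit Arguments. Unset Strict Implicit. Unset Printing Implicit Defensive.
Import Order.TTheory GRing.Theory Num.Theory.
Local Open Scope ring_scope.

Definition sym_irrefl (N : nat) (e : rel 'I_N) : Prop :=
  (forall i j, e i j = e j i) /\ (forall i, ~~ e i i).

Definition connected_graph (N : nat) (e : rel 'I_N) : Prop :=
  forall i j, connect e i j.

Definition adjmx (R : nzRingType) (N : nat) (e : rel 'I_N) : 'M[R]_N :=
  \matrix_(i, j) (e i j)%:R.

Definition degree (R : nzRingType) (N : nat) (e : rel 'I_N) (i : 'I_N) : R :=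
  \sum_j adjmx R e i j.

Definition laplacian (R : nzRingType) (N : nat) (e : rel 'I_N) : 'M[R]_N :=
  diag_mx (\row_i degree R e i) - adjmx R e.

Definition nbsum (R : nzRingType) (N : nat) (e : rel 'I_N) (w : 'rV[R]_N) (i : 'I_N) : R :=
  \sum_(j | adjmx R e i j == 1) w 0 j.

Definition Tmx (R : fieldType) (N : nat) (e : rel 'I_N) (w : 'rV[R]_N) : 'M[R]_N :=
  \matrix_(i, j) (if i == j then nbsum e w i / laplacian R e i i else w 0 j).

Definition What (R : fieldType) (n : nat) (e : rel 'I_n.+1) (w : 'rV[R]_n.+1) (eps : R)
  : 'M[R]_n.+1 :=
  1%:M - eps *: map2_mx *%R (Tmx e w) (laplacian R e).

Definition nonneg_mx (R : numDomainType) (m n : nat) (M : 'M[R]_(m, n)) : Prop :=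
  forall i j, 0 <= M i j.

Definition primitive_mx (R : numDomainType) (n : nat) (M : 'M[R]_n.+1) : Prop :=
  nonneg_mx M /\ exists k : nat, (0 < k)%N /\ forall i j, 0 < (M ^+ k) i j.

(* Main.v *)
Require Import Defs.
From HB Require Import structures.
From mathcomp Require Import all_boot all_order all_algebra.
From mathcomp Require Import complex.
From mathcomp Require Import ring lra.
Import Order.TTheory GRing.Theory Num.Theory.
Local Open Scope ring_scope.

Section H.
Variables (R : rcfType) (n : nat) (e : rel 'I_n.+2) (w : 'rV[R]_n.+2) (eps : R).
Hypothesis He : sym_irrefl e.

Lemma sum_delta (i : 'I_n.+2) (F : 'I_n.+2 -> R) :
  \sum_j (i == j)%:R * F j = F i.
Proof.
rewrite (bigD1 i) //= eqxx mul1r big1 ?addr0 // => j /negPf.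
by rewrite eq_sym => ->; rewrite mul0r.
Qed.

Lemma sum_delta' (i : 'I_n.+2) (F : 'I_n.+2 -> R) :
  \sum_j F j * (j == i)%:R = F i.
Proof.
rewrite (bigD1 i) //= eqxx mulr1 big1 ?addr0 // => j /negPf ->.
by rewrite mulr0.
Qed.

Lemma nbsumE i : nbsum e w i = \sum_j (e i j)%:R * w 0 j.
Proof.
rewrite /nbsum (eq_bigl (fun j => e i j)); last first.
  by move=> j; rewrite mxE; case: (e i j); rewrite ?eqxx // eq_sym oner_eq0.
by rewrite big_mkcond /=; apply: eq_bigr => j _; case: (e i j); rewrite ?mul1r ?mul0r.
Qed.

Lemma WhatE i j : What e w eps i j =
  (i == j)%:R - eps * ((i == j)%:R * nbsum e w i - (e i j)%:R * w 0 j).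
Proof.
rewrite /What. rewrite !mxE.
case: eqP => [<-|/eqP ne].
  have -> : e i i = false by apply/negbTE; case: He.
  rewrite eqxx mulr1n subr0 mul1r mul0r subr0.
  have [d0|dn0] := eqVneq (degree R e i) 0.
    rewrite d0 mulr0.
    suff -> : nbsum e w i = 0 by [].
    rewrite nbsumE big1 // => k _.
    move: d0; rewrite /degree => /eqP; rewrite psumr_eq0; last first.
      by move=> k0 _; rewrite mxE ler0n.
    move=> /allP /(_ k (mem_index_enum k)) /=; rewrite mxE pnatr_eq0 => /eqP.
    by case: (e i k) => // _; rewrite mul0r.
  by rewrite mulfVK.
rewrite !mulr0n !mul0r; ring.
Qed.

Lemma Sge0 (Hw : forall i, 0 < w 0 i) i : 0 <= nbsum e w i.
Proof.
rewrite nbsumE; apply: sumr_ge0 => j _; apply: mulr_ge0; last exact: ltW.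
by rewrite ler0n.
Qed.

Lemma rowsum i : \sum_j What e w eps i j = 1.
Proof.
have -> : \sum_j What e w eps i j = \sum_j ((i == j)%:R * 1 -
   eps * ((i == j)%:R * nbsum e w i) + eps * ((e i j)%:R * w 0 j)).
  by apply: eq_bigr => j _; rewrite WhatE; ring.
by rewrite big_split /= sumrB -!mulr_sumr !sum_delta -nbsumE subrK.
Qed.

Lemma colw j : \sum_i w 0 i * What e w eps i j = w 0 j.
Proof.
have -> : \sum_i w 0 i * What e w eps i j = \sum_i (w 0 i * (i == j)%:R -
   eps * (w 0 i * nbsum e w i * (i == j)%:R) + eps * w 0 j * ((e j i)%:R * w 0 i)).
  apply: eq_bigr => i _; rewrite WhatE.
  by case: He => Hs _; rewrite (Hs i j); ring.
by rewrite big_split /= sumrB -!mulr_sumr !sum_delta' -nbsumE mulrA subrK.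
Qed.

Lemma Woff i j : i != j -> What e w eps i j = eps * ((e i j)%:R * w 0 j).
Proof. by move=> /negPf Hij; rewrite WhatE Hij !mulr0n mul0r; ring. Qed.

Lemma Wdiag i : What e w eps i i = 1 - eps * nbsum e w i.
Proof. by rewrite WhatE eqxx; case: He => _ /(_ i) /negPf ->; rewrite !mulr1n !mulr0n; ring. Qed.

End H.

Lemma prod_ge (R : rcfType) (N : nat) (A B : 'M[R]_N.+1) i l j :
  nonneg_mx A -> nonneg_mx B -> A i l * B l j <= (A * B) i j.
Proof.
move=> HA HB; rewrite -mulmxE mxE (bigD1 l) //= lerDl.
by apply: sumr_ge0 => k _; apply: mulr_ge0.
Qed.

Lemma pow_nonneg (R : rcfType) (N : nat) (A : 'M[R]_N.+1) k :
  nonneg_mx A -> nonneg_mx (A ^+ k).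
Proof.
move=> HA; elim: k => [|k IH] i j.
  by rewrite expr0 mxE ler0n.
rewrite exprS -mulmxE mxE; apply: sumr_ge0 => l _; exact: mulr_ge0.
Qed.

Arguments pow_nonneg {R N A} k _.
Arguments prod_ge {R N A B} i l j _ _.

Lemma pow_mono (R : rcfType) (N : nat) (A : 'M[R]_N.+1) k m i j :
  nonneg_mx A -> (forall l, 0 < A l l) -> 0 < (A ^+ k) i j -> 0 < (A ^+ (k + m)) i j.
Proof.
move=> HA Hd Hk; elim: m => [|m IH]; first by rewrite addn0.
rewrite addnS exprSr; apply: (lt_le_trans _ (prod_ge i j j (pow_nonneg (k+m) HA) HA)).
exact: mulr_gt0.
Qed.

Lemma path_pos (R : rcfType) (N : nat) (A : 'M[R]_N.+1) (e : rel 'I_N.+1) :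
  nonneg_mx A -> (forall i j, e i j -> 0 < A i j) ->
  forall p i, path e i p -> 0 < (A ^+ size p) i (last i p).
Proof.
move=> HA He; elim=> [|x p IH] i /=.
  by move=> _; rewrite expr0 mxE eqxx ltr01.
move=> /andP [eix Hp]; rewrite exprS.
apply: (lt_le_trans _ (prod_ge i x _ HA (pow_nonneg _ HA))).
by apply: mulr_gt0; [exact: He | exact: IH].
Qed.

Theorem lemma3 (R : rcfType) (n : nat) (e : rel 'I_n.+2) (w : 'rV[R]_n.+2) (eps : R) :
  sym_irrefl e -> connected_graph e ->
  (forall i, 0 < w 0 i) ->
  0 < eps -> eps < 1 / \big[Num.max/0]_(i < n.+2) nbsum e w i ->
  [/\ nonneg_mx (What e w eps),
      w *m What e w eps = w,
      What e w eps *m (const_mx 1 : 'cV[R]_n.+2) = const_mx 1,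
      (forall lambda : R[i],
          eigenvalue (map_mx (fun x => x%:C%C) (What e w eps)) lambda ->
          `|lambda| <= 1)
    & primitive_mx (What e w eps)].
Proof.
move=> He Hc Hw Heps Hlt.
set M := \big[Num.max/0]_(i < n.+2) nbsum e w i in Hlt.
have SM i : nbsum e w i <= M by apply: le_bigmax.
have Mpos : 0 < M.
  rewrite ltNge; apply/negP => HM.
  by move: Hlt; rewrite div1r; move: HM; rewrite -invr_le0 => HM /lt_le_trans /(_ HM); rewrite ltNge (ltW Heps).
have epsS i : eps * nbsum e w i < 1.
  apply: le_lt_trans (_ : eps * M < 1).
    by apply: ler_wpM2l (SM i); exact: ltW.
  by rewrite -ltr_pdivlMr.
have Hd i : 0 < What e w eps i i by rewrite Wdiag // subr_gt0.
have Hoff i j : e i j -> 0 < What e w eps i j.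
  move=> eij; have nij : i != j.
    by apply/eqP => Eij; move: eij; rewrite Eij; case: He => _ /(_ j) /negPf ->.
  by rewrite Woff // eij mul1r mulr_gt0.
have Hnn : nonneg_mx (What e w eps).
  move=> i j; case: (eqVneq i j) => [<-|nij]; first exact: ltW.
  rewrite Woff //; apply: mulr_ge0; first exact: ltW.
  by apply: mulr_ge0; [rewrite ler0n | exact: ltW].
split => //.
- by apply/rowP => j; rewrite mxE -[RHS](@colw _ _ _ w eps He j).
- apply/colP => i; rewrite mxE [RHS]mxE.
  transitivity (\sum_j What e w eps i j); last exact: rowsum.
  by apply: eq_bigr => j _; rewrite [const_mx _ _ _]mxE mulr1.
- have Hrow i : \sum_j What e w eps i j = 1 by exact: rowsum.
  move: (What e w eps) Hnn Hrow => W HW Hrow lam /eigenvalueP [v Hv vn0].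
  have Hj j : `|lam| * `|v 0 j| <= \sum_i `|v 0 i| * (W i j)%:C%C.
    have E : lam * v 0 j = \sum_i v 0 i * (W i j)%:C%C.
      move/rowP: Hv => /(_ j); rewrite !mxE => <-.
      by apply: eq_bigr => i _; rewrite mxE.
    rewrite -normrM E; apply: le_trans (ler_norm_sum _ _ _) _.
    apply: ler_sum => i _; rewrite normrM (ger0_norm (x := (W i j)%:C%C)) //.
    by rewrite ler0c HW.
  have Hs : `|lam| * \sum_j `|v 0 j| <= \sum_j `|v 0 j|.
    rewrite mulr_sumr; apply: le_trans (ler_sum _ (fun j _ => Hj j)) _.
    rewrite exchange_big /= le_eqVlt; apply/orP; left; apply/eqP.
    apply: eq_bigr => i _.
    by rewrite -mulr_sumr -(@rmorph_sum _ _ (real_complex R)) Hrow rmorph1 mulr1.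
  have spos : 0 < \sum_j `|v 0 j|.
    case: (pickP (fun j => v 0 j != 0)) => [j vj | H].
      rewrite (bigD1 j) //=; apply: ltr_wpDr; last by rewrite normr_gt0.
      by apply: sumr_ge0 => k _.
    by case/eqP: vn0; apply/rowP => j; rewrite mxE; move/negbFE: (H j) => /eqP.
  by rewrite -(ger_pMl _ spos).
- split => //.
  have Hk : forall p : 'I_n.+2 * 'I_n.+2, exists k, 0 < (What e w eps ^+ k) p.1 p.2.
    move=> [i j] /=; have /connectP [p Hp ->] := Hc i j.
    exists (size p); exact: (@path_pos _ _ _ e Hnn Hoff p i Hp).
  pose kk p := xchoose (Hk p).
  exists (\max_p kk p).+1; split => // i j.
  have := xchooseP (Hk (i, j)); rewrite -/(kk (i, j)) /= => H.
  have Hle : (kk (i, j) <= (\max_p kk p).+1)%N.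
    by apply: leqW; apply: (@leq_bigmax _ kk (i, j)).
  by rewrite -(subnKC Hle); apply: pow_mono.
Qed.
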